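(* Let $w\ge 2$ and let $(C_1,C_2)$ be an equitable $2$-partition of $J(n,w)$ whose quotient matrix $\begin{pmatrix} a & b\\ c& d\end{pmatrix}$ has $\lambda_2(n,w)=(w-2)(n-w-2)-2$ as an eigenvalue, with the cells ordered so that $b\ge c$. Then the quotient matrix equals $\begin{pmatrix} w(n-w)-b & b\\ 2n-2-b & w(n-w)-2n+2+b\end{pmatrix}$ for some $b\in\{n-1,n,\dots,2n-1\}$.
   Context: The Johnson graph $J(n,w)$ has as vertices the binary vectors of length $n$ with exactly $w$ ones; two vertices are adjacent iff they have exactly $w-1$ common ones; it is regular of degree $w(n-w)$. A $2$-partition $(C_1,C_2)$ of the vertex set into nonempty cells is equitable with quotient matrix $S=(s_{ij})$ if every vertex of $C_i$ has exactly $s_{ij}$ neighbours in $C_j$. The paper adopts the convention that cells are ordered so that $s_{12}\ge s_{21}$. *)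

(* Defs.v *)
From HB Require Import structures.
From mathcomp Require Import all_boot all_order all_algebra.
Set Implicit Arguments. Unset Strict Implicit. Unset Printing Implicit Defensive.
Import Order.TTheory GRing.Theory Num.Theory.

(* Johnson graph J(n,w): vertices = w-subsets of 'I_n (binary vectors of
   length n with exactly w ones, identified with their supports). *)
Definition JV (n w : nat) : {set {set 'I_n}} := [set A : {set 'I_n} | #|A| == w].

Definition Jadj (n w : nat) (A B : {set 'I_n}) : bool := #|A :&: B| == w.-1.

Definition equitable2 (n w : nat) (C1 C2 : {set {set 'I_n}}) (a b c d : nat) : Prop :=
  [/\ C1 != set0, C2 != set0, C1 :&: C2 = set0 & C1 :|: C2 = JV n w] /\
  (forall x, x \in C1 ->
         #|[set y in C1 | Jadj w x y]| = a /\ #|[set y in C2 | Jadj w x y]| = b) /\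
  (forall x, x \in C2 ->
         #|[set y in C1 | Jadj w x y]| = c /\ #|[set y in C2 | Jadj w x y]| = d).

Definition qmat (a b c d : nat) : 'M[rat]_2 :=
  \matrix_(i < 2, j < 2)
     (if i == 0 :> nat then (if j == 0 :> nat then a%:R else b%:R)
      else (if j == 0 :> nat then c%:R else d%:R))%R.

(* Main.v *)
Require Import Defs.
From HB Require Import structures.
From mathcomp Require Import all_boot all_order all_algebra zify ring lra.
Import Order.TTheory GRing.Theory Num.Theory.

Lemma deg_J n w (x : {set 'I_n}) : #|x| = w -> (1 <= w)%N ->
  #|[set y in JV n w | Jadj w x y]| = (w * (n - w))%N.
Proof.
move=> xw w1.
pose f := fun p : 'I_n * 'I_n => (x :\ p.1) :|: [set p.2].
have <- : #|setX x (~: x)| = (w * (n - w))%N.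
  by rewrite cardsX; have := cardsC x; rewrite card_ord xw => E; by have -> : (n - w)%N = #|~: x| by apply/eqP; rewrite -(eqn_add2l w) subnKC -?E ?leq_addr ?E.
have -> : [set y in JV n w | Jadj w x y] = f @: setX x (~: x).
  apply/setP=> y; rewrite !inE /Jadj; apply/idP/imsetP.
  - case/andP=> yw xy.
    have c1 : #|x :\: y| = 1%N.
      by move: (cardsID y x); rewrite (eqP xy) xw; lia.
    have c2 : #|y :\: x| = 1%N.
      by move: (cardsID x y); rewrite setIC (eqP xy) (eqP yw); lia.
    move/eqP/cards1P: c1 => [i Hi]; move/eqP/cards1P: c2 => [j Hj].
    have : i \in x :\: y by rewrite Hi set11.
    have : j \in y :\: x by rewrite Hj set11.
    rewrite !inE => /andP[jx jy] /andP[iy ix].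
    exists (i, j); first by rewrite !inE ix.
    apply/setP=> z; rewrite /f /= !inE.
    case: (eqVneq z j) => [->|zj]; first by rewrite jy orbT.
    case: (eqVneq z i) => [->|zi] /=; first by rewrite (negbTE iy).
    case zx: (z \in x); case zy: (z \in y) => //.
    + have : z \in x :\: y by rewrite !inE zx zy.
      by rewrite Hi inE (negbTE zi).
    + have : z \in y :\: x by rewrite !inE zx zy.
      by rewrite Hj inE (negbTE zj).
  - case=> [[i j]]; rewrite !inE /= => /andP[ix jx] ->; rewrite /f /=.
    have jx' : j \notin x :\ i by rewrite !inE (negbTE jx) andbF.
    have ci : #|x :\ i| = w.-1.
      by move: xw; rewrite (cardsD1 i x) ix => <-.
    have e2 : x :&: (x :\ i :|: [set j]) = x :\ i.
      apply/setP=> z; rewrite !inE.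
      case: (eqVneq z j) => [->|zj]; first by rewrite (negbTE jx) andbF.
      by case: (z \in x); case: (z != i).
    rewrite e2 setUC cardsU1 jx' ci; apply/andP; split; apply/eqP; lia.
rewrite card_in_imset // => [[i j]] [i' j']; rewrite !inE /= /f.
move=> /andP[ix jx] /andP[ix' jx'] E.
have jj : j = j'.
  have : j \in x :\ i' :|: [set j'] by rewrite -E !inE eqxx orbT.
  by rewrite !inE (negbTE jx) andbF /= => /eqP.
subst j'; congr pair.
have : i \notin x :\ i' :|: [set j].
  rewrite -E !inE eqxx /=; apply/eqP => ij; subst j; by rewrite ix in jx.
rewrite !inE ix andbT negb_or => /andP[/negPn/eqP] //.
Qed.

Lemma split_card (T : finType) (C1 C2 : {set T}) (P : pred T) :
  C1 :&: C2 = set0 ->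
  #|[set y in C1 :|: C2 | P y]| = (#|[set y in C1 | P y]| + #|[set y in C2 | P y]|)%N.
Proof.
move=> D.
have -> : [set y in C1 :|: C2 | P y] = [set y in C1 | P y] :|: [set y in C2 | P y].
  apply/setP=> y; rewrite !inE.
  by case: (y \in C1); case: (y \in C2); case: (P y).
rewrite -cardsUI.
have -> : [set y in C1 | P y] :&: [set y in C2 | P y] = set0.
  apply/setP=> y; have Dy : (y \in C1 :&: C2) = (y \in set0) by rewrite D.
  move: Dy; rewrite !inE.
  by case: (y \in C1); case: (y \in C2); case: (P y).
by rewrite cards0 addn0.
Qed.

Local Open Scope ring_scope.

Lemma qmat_eq (a b c d : nat) (l : rat) (v : 'rV[rat]_2) :
  v *m qmat a b c d = l *: v ->
  v 0 0 * a%:R + v 0 1 * c%:R = l * v 0 0 /\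
  v 0 0 * b%:R + v 0 1 * d%:R = l * v 0 1.
Proof.
move=> Hv.
have E0 := congr1 (fun M : 'rV_2 => M 0 0) Hv.
have E1 := congr1 (fun M : 'rV_2 => M 0 1) Hv.
move: E0 E1; rewrite /= !mxE !big_ord_recl big_ord0 /= !mxE /= !addr0.
rewrite big_ord0 addr0.
have -> : lift ord0 ord0 = 1 :> 'I_2 by apply/val_inj.
by move=> h0 h1; split; [exact: h0 | exact: h1].
Qed.

Local Close Scope ring_scope.

Theorem proposition1 (n w : nat) (C1 C2 : {set {set 'I_n}}) (a b c d : nat) :
  (2 <= w)%N ->
  @equitable2 n w C1 C2 a b c d ->
  (c <= b)%N ->
  eigenvalue (qmat a b c d)
    ((((w%:R : rat) - 2) * ((n%:R : rat) - w%:R - 2) - 2)%R) ->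
  [/\ (n.-1 <= b <= (2 * n).-1)%N,
      (a%:Z = w%:Z * (n%:Z - w%:Z) - b%:Z)%R,
      (c%:Z = 2 * n%:Z - 2 - b%:Z)%R &
      (d%:Z = w%:Z * (n%:Z - w%:Z) - 2 * n%:Z + 2 + b%:Z)%R].
Proof.
move=> w2 [[C1n C2n C12 CU] [H1 H2]] cb /eigenvalueP [v Hv vn0].
case/set0Pn: C1n => x1 x1C; case/set0Pn: C2n => x2 x2C.
have xJ1 : x1 \in JV n w by rewrite -CU inE x1C.
have xJ2 : x2 \in JV n w by rewrite -CU inE x2C orbT.
rewrite /JV !inE in xJ1 xJ2.
have nw : (w <= n)%N by rewrite -(eqP xJ1) -[X in (_ <= X)%N](card_ord n) max_card.
have ab : (a + b)%N = (w * (n - w))%N.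
  rewrite -(@deg_J n w x1 (eqP xJ1)) ?(ltnW w2) // -CU split_card //.
  by case: (H1 _ x1C) => -> ->.
have cd : (c + d)%N = (w * (n - w))%N.
  rewrite -(@deg_J n w x2 (eqP xJ2)) ?(ltnW w2) // -CU split_card //.
  by case: (H2 _ x2C) => -> ->.
have ab' : (a + b + w * w)%N = (w * n)%N by rewrite ab -mulnDr subnK.
have cd' : (c + d + w * w)%N = (w * n)%N by rewrite cd -mulnDr subnK.
have n2 : (2 <= n)%N by apply: leq_trans w2 nw.
Local Open Scope ring_scope.
case: (@qmat_eq a b c d _ v Hv) => E0 E1.
set v0 := v 0 0 in E0 E1; set v1 := v 0 1 in E0 E1.
set l := (_ - 2)%R in E0 E1.
have abR : (a%:R + b%:R + w%:R * w%:R = w%:R * n%:R :> rat)%R.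
  by rewrite -!natrM -!natrD ab'.
have cdR : (c%:R + d%:R + w%:R * w%:R = w%:R * n%:R :> rat)%R.
  by rewrite -!natrM -!natrD cd'.
have sum0 : (v0 + v1 = 0)%R.
  have h : ((v0 + v1) * (2 * n%:R - 2) = 0 :> rat)%R.
    have -> : ((v0 + v1) * (2 * n%:R - 2) =
       (v0 * a%:R + v1 * c%:R - l * v0) + (v0 * b%:R + v1 * d%:R - l * v1)
       - v0 * (a%:R + b%:R + w%:R * w%:R - w%:R * n%:R)
       - v1 * (c%:R + d%:R + w%:R * w%:R - w%:R * n%:R) :> rat)%R.
      by rewrite /l; ring.
    by rewrite E0 E1 abR cdR !subrr !mulr0 !subr0.
  move/eqP: h; rewrite mulf_eq0 => /orP[/eqP //|].
  have : (2 * n%:R - 2 != 0 :> rat)%R.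
    have -> : (2 * n%:R - 2 = (2 * n - 2)%N%:R :> rat)%R.
      rewrite natrB ?natrM //; lia.
    rewrite pnatr_eq0; lia.
  by move/negbTE ->.
have v0n : (v0 != 0)%R.
  apply: contra vn0 => /eqP v00; apply/eqP/matrixP => i j.
  rewrite !mxE (ord1 i); case: j => [[|[|//]]] Hj.
  - by have -> : Ordinal Hj = 0%R by apply/val_inj.
  - have -> : Ordinal Hj = 1%R by apply/val_inj.
    by move: sum0; rewrite -/v1 -/v0 v00 add0r.
have lac : (a%:R - c%:R = l :> rat)%R.
  have v1e : v1 = (- v0)%R by apply/eqP; rewrite -addr_eq0 addrC sum0.
  rewrite v1e in E0.
  by apply: (mulIf v0n); rewrite -E0; ring.
have natE : (a + w * w + 2 * n)%N = (w * n + 2 + c)%N.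
  apply/eqP; rewrite -(eqr_nat rat) !natrD !natrM.
  have -> : (a%:R = l + c%:R :> rat) by rewrite -lac subrK.
  by apply/eqP; rewrite /l; ring.
Local Close Scope ring_scope.
split; [lia | lia | lia | lia].
Qed.
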